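(* Let $\{(Y_i,X_i^T)\}_{i=1}^n$ be i.i.d. copies of $(Y,X^T)$, where $Y$ is real-valued and $X$ takes values in a support $\mathcal{X}\subset\mathbb{R}^{\dim X}$, and let $g_0(x)=E[Y\mid X=x]$. Let $\mathbf{A}_0$ be a known linear operator mapping functions on $\mathcal{X}$ to real-valued functions on a set $\mathcal{W}_0$, and $\mathbf{A}_1$ a known linear operator mapping functions on $\mathcal{X}$ to real-valued functions on a set $\mathcal{W}_1$; put $\theta_0=\mathbf{A}_0g_0$. Let $p_{1:k}=(p_1,\dots,p_k)^T$ be functions on $\mathcal{X}$ ($k\ge 2$), assume $E[p_{1:k}(X)p_{1:k}(X)^T]$ is invertible, and let $\bar\beta=E[p_{1:k}(X)p_{1:k}(X)^T]^{-1}E[p_{1:k}(X)Y]$. Assume there are known functions $\delta_0$ on $\mathcal{W}_0$ and $\delta_1$ on $\mathcal{W}_1$ with $|[\mathbf{A}_0(g_0-p_{1:k}^T\bar\beta)](w_0)|\le\delta_0(w_0)$ for all $w_0\in\mathcal{W}_0$ and $|[\mathbf{A}_1(g_0-p_{1:k}^T\bar\beta)](w_1)|\le\delta_1(w_1)$ for all $w_1\in\mathcal{W}_1$. Define $\hat\omega=p_{1:k}(X)\bigl(Y-p_{1:k}(X)^TE_n[p_{1:k}(X)p_{1:k}(X)^T]^{-1}E_n[p_{1:k}(X)Y]\bigr)$ (computed for each observation), let $\eta_1,\dots,\eta_n$ be i.i.d. Rademacher variables independent of the data, and let $cv$ be the $(1-\alpha)$ quantile, conditional on the data, of $\|E_n[\hat\omega\hat\omega^T]^{-1/2}E_n[\eta\hat\omega]\|_\infty$.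 Consider the constraints on $\beta\in\mathbb{R}^k$: (C1) $\|E_n[\hat\omega\hat\omega^T]^{-1/2}E_n[p_{1:k}(X)(Y-p_{1:k}(X)^T\beta)]\|_\infty\le cv$; (C3) $[\mathbf{A}_1p_{1:k}^T](w_1)\beta\le\delta_1(w_1)$ for every $w_1\in\mathcal{W}_1$; and let $CR_\theta$ be the set of functions $\theta:\mathcal{W}_0\to\mathbb{R}$ for which there exists $\beta\in\mathbb{R}^k$ satisfying (C1), (C3), and $|[\mathbf{A}_0p_{1:k}^T](w_0)\beta-\theta(w_0)|\le\delta_0(w_0)$ for every $w_0\in\mathcal{W}_0$. Then for every $w_0\in\mathcal{W}_0$, the projection $\{\theta(w_0):\theta\in CR_\theta\}$ equals the closed interval $$\Bigl[\min_{\beta\ \text{s.t. (C1),(C3)}}[\mathbf{A}_0p_{1:k}^T](w_0)\beta-\delta_0(w_0),\ \max_{\beta\ \text{s.t. (C1),(C3)}}[\mathbf{A}_0p_{1:k}^T](w_0)\beta+\delta_0(w_0)\Bigr].$$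
   Context: $E_n$ denotes the sample mean: $E_n[f(Y,X^T)]=\frac1n\sum_{i=1}^nf(Y_i,X_i^T)$, and $E_n[\eta\hat\omega]=\frac1n\sum_i\eta_i\hat\omega_i$. The notation $[\mathbf{A}_jp_{1:k}^T](w)\beta$ means $[\mathbf{A}_j(p_{1:k}^T\beta)](w)$ for $j=0,1$. $\|\cdot\|_\infty$ is the sup-norm of a vector in $\mathbb{R}^k$. The constraints (C1) and (C3) are linear in $\beta$, so the endpoints are values of linear programs. *)

(* Defs.v *)
From HB Require Import structures.
From mathcomp Require Import all_boot all_order all_algebra.
From mathcomp Require Import reals.
Set Implicit Arguments. Unset Strict Implicit. Unset Printing Implicit Defensive.
Import Order.TTheory GRing.Theory Num.Theory.
Local Open Scope ring_scope.

Section Defs.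
Variable R : realType.

Definition linop (D W : Type) (A : (D -> R) -> (W -> R)) : Prop :=
  forall (a : R) (f g : D -> R) (w : W),
    A (fun x => a * f x + g x) w = a * A f w + A g w.

(* A operates on functions on the support Xsup: it only depends on values on Xsup. *)
Definition on_support (D W : Type) (Xsup : D -> Prop)
  (A : (D -> R) -> (W -> R)) : Prop :=
  forall f g : D -> R, (forall x, Xsup x -> f x = g x) -> A f = A g.

Definition supnorm k (v : 'cV[R]_k) : R := \big[Num.max/0]_(i < k) `|v i 0|.

Definition pvec D k (p : 'I_k -> D -> R) (x : D) : 'cV[R]_k := \col_i p i x.

Definition pfun D k (p : 'I_k -> D -> R) (beta : 'cV[R]_k) : D -> R :=
  fun x => \sum_(j < k) p j x * beta j 0.

Definition En n (f : 'I_n -> R) : R := n%:R^-1 * \sum_(i < n) f i.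
Definition Enmx n r c (F : 'I_n -> 'M[R]_(r, c)) : 'M[R]_(r, c) :=
  n%:R^-1 *: \sum_(i < n) F i.

Definition is_inv_sqrt k (S M : 'M[R]_k) : Prop :=
  S^T = S /\ (forall v : 'cV[R]_k, v != 0 -> 0 < (v^T *m S *m v) 0 0)
  /\ S *m S *m M = 1%:M.

Definition rsign (b : bool) : R := if b then 1 else -1.

(* (1 - alpha) quantile of the law of stat(eta), eta uniform on {-1,1}^n *)
Definition rad_cdf n (stat : {ffun 'I_n -> bool} -> R) (c : R) : R :=
  #|[set eta : {ffun 'I_n -> bool} | stat eta <= c]|%:R / (2 ^+ n).

Definition is_quantile n (stat : {ffun 'I_n -> bool} -> R) (q alpha : R) : Prop :=
  1 - alpha <= rad_cdf stat q /\
  forall c, 1 - alpha <= rad_cdf stat c -> q <= c.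

Definition is_min_val (B : Type) (F : B -> Prop) (f : B -> R) (m : R) : Prop :=
  (exists2 b, F b & f b = m) /\ (forall b, F b -> m <= f b).
Definition is_max_val (B : Type) (F : B -> Prop) (f : B -> R) (m : R) : Prop :=
  (exists2 b, F b & f b = m) /\ (forall b, F b -> f b <= m).

End Defs.

(* Main.v *)
Require Import Defs.
From HB Require Import structures.
From mathcomp Require Import all_boot all_order all_algebra.
From mathcomp Require Import reals.
Import Order.TTheory GRing.Theory Num.Theory.
Local Open Scope ring_scope.
From Stdlib Require Import ClassicalEpsilon.
From mathcomp Require Import ring lra.

Section H.
Variable R : realType.

Lemma supnormP k (v : 'cV[R]_k) c :
  (supnorm v <= c) <-> (0 <= c /\ forall i, `|v i 0| <= c).
Proof.
rewrite /supnorm; split.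
- by move/bigmax_leP => [h1 h2]; split => // i; apply: h2.
- by move=> [h1 h2]; apply/bigmax_leP; split => // i _; apply: h2.
Qed.

Lemma lin_comb (D W : Type) (Xsup : D -> Prop) (A : (D -> R) -> (W -> R)) :
  linop A -> on_support Xsup A -> forall a b f g w,
  A (fun x => a * f x + b * g x) w = a * A f w + b * A g w.
Proof.
move=> hA hS a b f g w.
have Z : A (fun _ => 0) w = 0.
  have := hA 1 (fun _ => 0) (fun _ => 0) w.
  rewrite (hS (fun _ : D => 1 * 0 + 0) (fun _ => 0)); last by move=> x _; rewrite mul1r addr0.
  rewrite mul1r => /eqP; rewrite -subr_eq0 opprD addrA subrr sub0r oppr_eq0 => /eqP //.
rewrite hA; congr (_ + _).
rewrite (hS (fun x => b * g x) (fun x => b * g x + (fun _ => 0) x)); last by move=> x _; rewrite addr0.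
by rewrite hA Z addr0.
Qed.

Lemma pfun_comb D k (p : 'I_k -> D -> R) a b (b1 b2 : 'cV[R]_k) x :
  pfun p (a *: b1 + b *: b2) x = a * pfun p b1 x + b * pfun p b2 x.
Proof.
rewrite /pfun !mulr_sumr -big_split /=; apply: eq_bigr => j _.
rewrite !mxE; ring.
Qed.

End H.
Arguments lin_comb {R D W Xsup A}.
Theorem theorem1
  (R : realType) (d n k : nat) (hk : (2 <= k)%N) (hn : (0 < n)%N)
  (Xsup : 'rV[R]_d -> Prop)
  (Ys : 'I_n -> R) (Xs : 'I_n -> 'rV[R]_d) (hXs : forall i, Xsup (Xs i))
  (W0 W1 : Type)
  (A0 : ('rV[R]_d -> R) -> (W0 -> R)) (A1 : ('rV[R]_d -> R) -> (W1 -> R))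
  (hA0 : linop A0) (hA1 : linop A1)
  (hA0s : on_support Xsup A0) (hA1s : on_support Xsup A1)
  (p : 'I_k -> 'rV[R]_d -> R)
  (g0 : 'rV[R]_d -> R) (betabar : 'cV[R]_k)
  (delta0 : W0 -> R) (delta1 : W1 -> R)
  (hbias0 : forall w0, `|A0 (fun x => g0 x - pfun p betabar x) w0| <= delta0 w0)
  (hbias1 : forall w1, `|A1 (fun x => g0 x - pfun p betabar x) w1| <= delta1 w1)
  (hG : Enmx (fun i => pvec p (Xs i) *m (pvec p (Xs i))^T) \in unitmx)
  (S : 'M[R]_k) (alpha cv : R) (halpha : 0 < alpha < 1) :
  let G := Enmx (fun i => pvec p (Xs i) *m (pvec p (Xs i))^T) in
  let bY := Enmx (fun i => Ys i *: pvec p (Xs i)) in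
  let omega := fun i : 'I_n =>
    (Ys i - ((pvec p (Xs i))^T *m (invmx G *m bY)) 0 0) *: pvec p (Xs i) in
  let Omega := Enmx (fun i => omega i *m (omega i)^T) in
  let stat := fun eta : {ffun 'I_n -> bool} =>
    supnorm (S *m Enmx (fun i => rsign R (eta i) *: omega i)) in
  is_inv_sqrt S Omega ->
  is_quantile stat cv alpha ->
  let C1 := fun beta : 'cV[R]_k =>
    supnorm (S *m Enmx (fun i =>
      (Ys i - ((pvec p (Xs i))^T *m beta) 0 0) *: pvec p (Xs i))) <= cv in
  let C3 := fun beta : 'cV[R]_k =>
    forall w1, A1 (pfun p beta) w1 <= delta1 w1 in
  let CR := fun theta : W0 -> R =>
    exists beta, [/\ C1 beta, C3 beta &
      forall w0, `|A0 (pfun p beta) w0 - theta w0| <= delta0 w0] in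
  forall (w0 : W0) (lo hi : R),
    is_min_val (fun beta => C1 beta /\ C3 beta) (fun beta => A0 (pfun p beta) w0) lo ->
    is_max_val (fun beta => C1 beta /\ C3 beta) (fun beta => A0 (pfun p beta) w0) hi ->
    forall t : R,
      (exists2 theta, CR theta & theta w0 = t) <->
      (lo - delta0 w0 <= t <= hi + delta0 w0).
Proof.
move=> G bY omega Omega stat hS hq C1 C3 CR w0 lo hi [[blo [Clo1 Clo3] Elo] Hlo] [[bhi [Chi1 Chi3] Ehi] Hhi] t.
have d0pos : forall w, 0 <= delta0 w by move=> w; apply: le_trans (hbias0 w).
split.
- move=> [theta [beta [c1 c3 c0]] <-].
  have := c0 w0; rewrite ler_norml => /andP [h1 h2].
  have := Hlo beta (conj c1 c3); have := Hhi beta (conj c1 c3).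
  move=> a1 a2; apply/andP; split; lra.
move=> /andP [t1 t2].
pose F := fun beta : 'cV[R]_k => S *m Enmx (fun i =>
      (Ys i - ((pvec p (Xs i))^T *m beta) 0 0) *: pvec p (Xs i)).
have Fcomb : forall l (b1 b2 : 'cV[R]_k), F ((1 - l) *: b1 + l *: b2) = (1 - l) *: F b1 + l *: F b2.
  move=> l b1 b2; rewrite /F !scalemxAr -mulmxDr; congr (_ *m _).
  rewrite /Enmx (scalerA (1 - l)) (scalerA l) (mulrC (1 - l)) (mulrC l) -!scalerA -scalerDr; congr (_ *: _).
  rewrite !scaler_sumr -big_split /=; apply: eq_bigr => i _.
  rewrite !scalerA -scalerDl; congr (_ *: _).
  rewrite mulmxDr -!scalemxAr !mxE; ring.
have feas : forall l, 0 <= l <= 1 -> forall b1 b2, C1 b1 /\ C3 b1 -> C1 b2 /\ C3 b2 ->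
   C1 ((1 - l) *: b1 + l *: b2) /\ C3 ((1 - l) *: b1 + l *: b2).
  move=> l /andP [l0 l1] b1 b2 [c11 c13] [c21 c23]; split.
  - rewrite /C1 -/(F _) Fcomb.
    move: c11 c21; rewrite /C1 -!/(F _) !supnormP.
    move: (F b1) (F b2) => u v [cv0 h1] [_ h2]; split => // i.
    rewrite !mxE; apply: (le_trans (ler_normD _ _)); rewrite !normrM.
    rewrite (ger0_norm l0) ger0_norm; last lra.
    have := h1 i; have := h2 i; move=> a1 a2.
    have : (1 - l) * `|u i 0| <= (1 - l) * cv by apply: ler_wpM2l => //; lra.
    have : l * `|v i 0| <= l * cv by apply: ler_wpM2l.
    lra.
  - move=> w1.
    rewrite (hA1s _ (fun x => (1 - l) * pfun p b1 x + l * pfun p b2 x)); last by move=> x _; rewrite pfun_comb.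
    rewrite (lin_comb hA1 hA1s).
    have := c13 w1; have := c23 w1; move=> a1 a2.
    have : (1 - l) * A1 (pfun p b1) w1 <= (1 - l) * delta1 w1 by apply: ler_wpM2l => //; lra.
    have : l * A1 (pfun p b2) w1 <= l * delta1 w1 by apply: ler_wpM2l.
    lra.
suff [beta [fb hb]] : exists beta, (C1 beta /\ C3 beta) /\ `|A0 (pfun p beta) w0 - t| <= delta0 w0.
  pose theta := fun w => if excluded_middle_informative (w = w0) then t else A0 (pfun p beta) w.
  exists theta; last by rewrite /theta; destruct (excluded_middle_informative (w0 = w0)).
  exists beta; split; [by case: fb | by case: fb |] => w.
  rewrite /theta; destruct (excluded_middle_informative (w = w0)) as [e|ne] => /=; first by rewrite e.
  by rewrite subrr normr0.
have [tl|tl] := lerP t (lo + delta0 w0).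
  exists blo; split => //; rewrite Elo ler_norml; apply/andP; split; lra.
have [th|th] := lerP (hi - delta0 w0) t.
  exists bhi; split => //; rewrite Ehi ler_norml; apply/andP; split; lra.
have d0 := d0pos w0.
have hl : 0 < hi - lo by lra.
pose l := (t - lo) / (hi - lo).
have l0 : 0 <= l by rewrite /l divr_ge0 //; lra.
have l1 : l <= 1 by rewrite /l ler_pdivrMr //; lra.
exists ((1 - l) *: blo + l *: bhi); split; first by apply: feas => //; apply/andP; split.
rewrite (hA0s _ (fun x => (1 - l) * pfun p blo x + l * pfun p bhi x)); last by move=> x _; rewrite pfun_comb.
rewrite (lin_comb hA0 hA0s) Elo Ehi.
have -> : (1 - l) * lo + l * hi = t.
  have e : l * (hi - lo) = t - lo by rewrite /l divfK // lt0r_neq0.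
  have -> : (1 - l) * lo + l * hi = lo + l * (hi - lo) by ring.
  rewrite e; ring.
by rewrite subrr normr0.
Qed.
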